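(* Let $I$ be a compact interval, $k\ge 2$ an integer, $u\in(0,1]$ and $\tau\in(0,1)$. If $\tau(1+\tau)^{k-2}\ge u$, then $\mathrm{Diff}_+^{1,\tau}(I)$ does not contain a $(k,u)$-nesting.
   Context: $\mathrm{Diff}_+^{1,\tau}(I)$ is the group of orientation-preserving $C^1$-diffeomorphisms of $I$ whose derivative is $\tau$-Hölder continuous. For an integer $k\ge2$ and $u\in(0,1]$, a finite set $S\subseteq\mathrm{Homeo}_+(I)$ is a $(k,u)$-nesting if there exist nonempty open intervals $J_1\supsetneq J_2\supsetneq\cdots\supsetneq J_k$ and an infinite sequence $(s_1,s_2,\ldots)$ of elements of $S$ such that, with $w_n=s_ns_{n-1}\cdots s_1$ for $n\ge0$ ($w_0$ the identity): (i) $\sum_{n\ge0}|w_nJ_1|^u<\infty$, where $|\cdot|$ is length; (ii) for each $i=2,\ldots,k$ and each $n\ge0$ there is $s\in S$ (possibly depending on $i,n$) with $sw_nJ_i\cap w_nJ_i=\varnothing$ and $sw_nJ_{i-1}=w_nJ_{i-1}$. *)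

(* Defs.v *)
From Stdlib Require Import Reals List.
From Coquelicot Require Import Coquelicot.
Open Scope R_scope.

Definition inI (a b x : R) : Prop := a <= x <= b.

(* Orientation-preserving homeomorphism of I (values outside I are irrelevant). *)
Definition HomeoPlus (a b : R) (f : R -> R) : Prop :=
  (forall x, inI a b x -> inI a b (f x)) /\
  (forall y, inI a b y -> exists x, inI a b x /\ f x = y) /\
  (forall x y, inI a b x -> inI a b y -> x < y -> f x < f y) /\
  (forall x, inI a b x -> forall eps, 0 < eps -> exists delta, 0 < delta /\
     forall y, inI a b y -> Rabs (y - x) < delta -> Rabs (f y - f x) < eps).

Definition derivI (a b : R) (f : R -> R) (x l : R) : Prop :=
  forall eps, 0 < eps -> exists delta, 0 < delta /\
    forall y, inI a b y -> y <> x -> Rabs (y - x) < delta ->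
      Rabs ((f y - f x) / (y - x) - l) < eps.

(* The derivative is positive on I
   (so the inverse is C^1 as well); continuity of f' follows from Hoelder. *)
Definition Diff1tau (a b tau : R) (f : R -> R) : Prop :=
  HomeoPlus a b f /\
  exists f' : R -> R,
    (forall x, inI a b x -> derivI a b f x (f' x)) /\
    (forall x, inI a b x -> 0 < f' x) /\
    (exists C, 0 <= C /\ forall x y, inI a b x -> inI a b y -> x <> y ->
        Rabs (f' x - f' y) <= C * Rpower (Rabs (x - y)) tau).

Definition openI (c d : R) : R -> Prop := fun x => c < x < d.

Definition img (f : R -> R) (A : R -> Prop) : R -> Prop :=
  fun y => exists x, A x /\ f x = y.

Definition set_eq (A B : R -> Prop) : Prop := forall x, A x <-> B x.
Definition disjoint (A B : R -> Prop) : Prop := forall x, ~ (A x /\ B x).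
Definition strict_sup (A B : R -> Prop) : Prop :=
  (forall x, B x -> A x) /\ exists x, A x /\ ~ B x.

Fixpoint word (s : nat -> R -> R) (n : nat) : R -> R :=
  match n with
  | O => fun x => x
  | S m => fun x => s (S m) (word s m x)
  end.

(* Since w_n is an increasing homeomorphism of I,
   w_n J_1 is the interval (w_n (c 1), w_n (d 1)), of length
   w_n (d 1) - w_n (c 1). *)
Definition nesting (a b : R) (k : nat) (u : R) (S : list (R -> R)) : Prop :=
  (forall f, In f S -> HomeoPlus a b f) /\
  exists (c d : nat -> R) (s : nat -> R -> R),
    (forall i, (1 <= i <= k)%nat -> a <= c i /\ c i < d i /\ d i <= b) /\
    (forall i, (2 <= i <= k)%nat ->
        strict_sup (openI (c (i - 1)%nat) (d (i - 1)%nat)) (openI (c i) (d i))) /\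
    (forall n, (1 <= n)%nat -> In (s n) S) /\
    ex_series (fun n => Rpower (word s n (d 1%nat) - word s n (c 1%nat)) u) /\
    (forall i n, (2 <= i <= k)%nat ->
       exists t, In t S /\
         disjoint (img t (img (word s n) (openI (c i) (d i))))
                  (img (word s n) (openI (c i) (d i))) /\
         set_eq (img t (img (word s n) (openI (c (i - 1)%nat) (d (i - 1)%nat))))
                (img (word s n) (openI (c (i - 1)%nat) (d (i - 1)%nat)))).

(* Main.v *)
Require Import Defs.
From Stdlib Require Import Reals List Lra Lia.
From Coquelicot Require Import Coquelicot.
Open Scope R_scope.

Definition clamp (a b x : R) := Rmax a (Rmin b x).

Lemma clamp_in a b x : a <= b -> inI a b (clamp a b x).
Proof. intros. unfold inI, clamp. split. apply Rmax_l.
  apply Rmax_lub; [lra| apply Rmin_l]. Qed.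

Lemma clamp_id a b x : inI a b x -> clamp a b x = x.
Proof. unfold inI, clamp; intros [H1 H2].
  rewrite Rmin_right by lra. rewrite Rmax_right by lra. reflexivity. Qed.

Lemma clamp_lip a b x y : a <= b -> Rabs (clamp a b y - clamp a b x) <= Rabs (y - x).
Proof. intros Hab. unfold clamp, Rmax, Rmin.
  repeat (destruct Rle_dec); unfold Rabs; repeat destruct Rcase_abs; lra. Qed.

Lemma mvtI a b f f' x y :
  a < b -> HomeoPlus a b f -> (forall z, inI a b z -> derivI a b f z (f' z)) ->
  a <= x -> x < y -> y <= b ->
  exists xi, x <= xi <= y /\ f y - f x = f' xi * (y - x).
Proof.
  intros Hab [_ [_ [_ Hc]]] Hd Hx Hxy Hy.
  set (F := fun z => f (clamp a b z)).
  destruct (MVT_gen F x y f') as [xi [Hxi Heq]].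
  - rewrite Rmin_left by lra. rewrite Rmax_right by lra.
    intros z Hz. apply is_derive_Reals.
    intros eps Heps.
    destruct (Hd z ltac:(unfold inI; lra) eps Heps) as [del [Hdel Hq]].
    assert (Hpos : 0 < Rmin del (Rmin (z - a) (b - z))).
    { repeat apply Rmin_pos; lra. }
    exists (mkposreal _ Hpos). simpl. intros h Hh0 Hh.
    assert (H1 := Rmin_l del (Rmin (z - a) (b - z))).
    assert (H2 := Rmin_r del (Rmin (z - a) (b - z))).
    assert (H3 := Rmin_l (z - a) (b - z)).
    assert (H4 := Rmin_r (z - a) (b - z)).
    assert (Hh' : - h <= Rabs h /\ h <= Rabs h) by (split; [apply Rabs_maj2| apply Rle_abs]).
    unfold F. rewrite (clamp_id a b z) by (unfold inI; lra).
    rewrite (clamp_id a b (z + h)) by (unfold inI; lra).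
    replace h with ((z + h) - z) at 2 by ring.
    apply Hq. unfold inI; lra. intro E. apply Hh0. lra.
    replace (z + h - z) with h by ring. lra.
  - rewrite Rmin_left by lra. rewrite Rmax_right by lra.
    intros z Hz. unfold continuity_pt, continue_in, limit1_in, limit_in. simpl.
    unfold R_dist. intros eps Heps.
    destruct (Hc (clamp a b z) (clamp_in a b z ltac:(lra)) eps Heps) as [del [Hdel Hq]].
    exists del. split; [lra|]. intros w [_ Hw]. unfold F.
    apply Hq. apply clamp_in; lra.
    eapply Rle_lt_trans. apply clamp_lip. lra. exact Hw.
  - exists xi. rewrite Rmin_left in Hxi by lra. rewrite Rmax_right in Hxi by lra.
    split; [exact Hxi|]. unfold F in Heq.
    rewrite (clamp_id a b x), (clamp_id a b y) in Heq by (unfold inI; lra). exact Heq.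
Qed.

Definition Hm (a b : R) (f : R -> R) : Prop :=
  (forall x, inI a b x -> inI a b (f x)) /\
  (forall y, inI a b y -> exists x, inI a b x /\ f x = y) /\
  (forall x y, inI a b x -> inI a b y -> x < y -> f x < f y).

Lemma Homeo_Hm a b f : HomeoPlus a b f -> Hm a b f.
Proof. intros [H1 [H2 [H3 _]]]. split; [|split]; assumption. Qed.

Lemma word_Hm a b s : (forall n, (1 <= n)%nat -> Hm a b (s n)) -> forall n, Hm a b (word s n).
Proof.
  intros Hs n. induction n as [|n IH].
  - simpl. split; [|split]; auto. intros y Hy; exists y; auto.
  - destruct IH as [I1 [I2 I3]]. destruct (Hs (S n) ltac:(lia)) as [S1 [S2 S3]].
    simpl. split; [|split].
    + intros; auto.
    + intros y Hy. destruct (S2 y Hy) as [z [Hz Ez]]. destruct (I2 z Hz) as [x [Hx Ex]].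
      exists x. split; auto. rewrite Ex; auto.
    + intros; auto.
Qed.

Lemma Hm_le a b f x y : Hm a b f -> inI a b x -> inI a b y -> x <= y -> f x <= f y.
Proof. intros [_ [_ H]] Hx Hy Hxy. destruct (Req_dec x y). subst; lra.
  left; apply H; auto; lra. Qed.

Lemma Hm_rev a b f x y : Hm a b f -> inI a b x -> inI a b y -> f x < f y -> x < y.
Proof. intros Hf Hx Hy Hl. destruct (Rlt_or_le x y); auto.
  assert (f y <= f x) by (apply (Hm_le a b); auto). lra. Qed.

Lemma img_int a b f c d : Hm a b f -> inI a b c -> inI a b d ->
  forall y, img f (openI c d) y <-> openI (f c) (f d) y.
Proof.
  intros Hf Hc Hd y. unfold img, openI. split.
  - intros [x [Hx Ex]]. subst y. destruct Hf as [_ [_ H]].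
    unfold inI in *. split; apply H; unfold inI; lra.
  - intros Hy. destruct Hf as [F1 [F2 F3]] eqn:E.
    assert (inI a b y). { pose proof (F1 c Hc); pose proof (F1 d Hd). unfold inI in *; lra. }
    destruct (F2 y H) as [x [Hx Ex]]. exists x. split; auto. subst y.
    split; [eapply (Hm_rev a b f c x)| eapply (Hm_rev a b f x d)]; eauto; lra.
Qed.

Lemma fix_left a b t P Q : Hm a b t -> inI a b P -> inI a b Q -> P < Q ->
  (forall y, (exists x, P < x < Q /\ t x = y) <-> P < y < Q) -> t P = P.
Proof.
  intros Ht HP HQ HPQ Heq. destruct Ht as [T1 [T2 T3]] eqn:E.
  assert (tP := T1 P HP). unfold inI in *.
  destruct (Rtotal_order (t P) P) as [Hl|[He|Hg]]; auto; exfalso.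
  - set (y := (t P + P) / 2).
    destruct (T2 y ltac:(unfold inI, y; lra)) as [z [Hz Ez]].
    assert (P < z). { apply (Hm_rev a b t); auto; unfold y in Ez; unfold inI; lra. }
    set (x := (P + Q) / 2).
    assert (Hx : P < x < Q) by (unfold x; lra).
    assert (Htx : P < t x < Q) by (apply Heq; exists x; auto).
    assert (z < x). { apply (Hm_rev a b t); auto; unfold x, y in *; unfold inI; lra. }
    assert (P < t z < Q) by (apply Heq; exists z; split; [lra|auto]).
    unfold y in Ez; lra.
  - set (y := (P + Rmin (t P) Q) / 2).
    assert (Hm1 := Rmin_l (t P) Q). assert (Hm2 := Rmin_r (t P) Q).
    assert (Hm3 : P < Rmin (t P) Q) by (apply Rmin_glb_lt; lra).
    destruct (proj2 (Heq y) ltac:(unfold y; lra)) as [z [Hz Ez]].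
    assert (t P < t z) by (apply T3; unfold inI; lra).
    unfold y in Ez; lra.
Qed.

Lemma fix_right a b t P Q : Hm a b t -> inI a b P -> inI a b Q -> P < Q ->
  (forall y, (exists x, P < x < Q /\ t x = y) <-> P < y < Q) -> t Q = Q.
Proof.
  intros Ht HP HQ HPQ Heq. destruct Ht as [T1 [T2 T3]] eqn:E.
  assert (tQ := T1 Q HQ). unfold inI in *.
  destruct (Rtotal_order (t Q) Q) as [Hl|[He|Hg]]; auto; exfalso.
  - set (y := (Q + Rmax (t Q) P) / 2).
    assert (Hm1 := Rmax_l (t Q) P). assert (Hm2 := Rmax_r (t Q) P).
    assert (Hm3 : Rmax (t Q) P < Q) by (apply Rmax_lub_lt; lra).
    destruct (proj2 (Heq y) ltac:(unfold y; lra)) as [z [Hz Ez]].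
    assert (t z < t Q) by (apply T3; unfold inI; lra).
    unfold y in Ez; lra.
  - set (y := (t Q + Q) / 2).
    destruct (T2 y ltac:(unfold inI, y; lra)) as [z [Hz Ez]].
    assert (z < Q). { apply (Hm_rev a b t); auto; unfold y in Ez; unfold inI; lra. }
    set (x := (P + Q) / 2).
    assert (Hx : P < x < Q) by (unfold x; lra).
    assert (Htx : P < t x < Q) by (apply Heq; exists x; auto).
    assert (x < z). { apply (Hm_rev a b t); auto; unfold x, y in *; unfold inI; lra. }
    assert (P < t z < Q) by (apply Heq; exists z; split; [lra|auto]).
    unfold y in Ez; lra.
Qed.

Definition Good (a b tau m C : R) (f : R -> R) : Prop :=
  HomeoPlus a b f /\ exists f' : R -> R,
    (forall x, inI a b x -> derivI a b f x (f' x)) /\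
    (forall x, inI a b x -> m <= f' x) /\
    (forall x y, inI a b x -> inI a b y -> x <> y ->
        Rabs (f' x - f' y) <= C * Rpower (Rabs (x - y)) tau).

Lemma Rpower_small e tau : 0 < e -> 0 < tau ->
  forall r, 0 < r -> r < Rpower e (/ tau) -> Rpower r tau < e.
Proof.
  intros He Ht r Hr Hlt.
  assert (Rpower r tau < Rpower (Rpower e (/tau)) tau).
  { apply Rlt_Rpower_l; auto. }
  rewrite Rpower_mult in H. replace (/ tau * tau) with 1 in H by (field; lra).
  rewrite Rpower_1 in H; auto.
Qed.

Lemma Diff_good a b tau f : a < b -> 0 < tau -> Diff1tau a b tau f ->
  exists m C, 0 < m /\ 0 <= C /\ Good a b tau m C f.
Proof.
  intros Hab Ht [Hh [f' [Hd [Hp [C [HC Hhol]]]]]].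
  set (g := fun z => f' (clamp a b z)).
  destruct (continuity_ab_min g a b ltac:(lra)) as [mx [Hmin Hmx]].
  - intros z Hz. unfold continuity_pt, continue_in, limit1_in, limit_in. simpl.
    unfold R_dist. intros eps Heps.
    set (e := eps / (C + 1)).
    assert (He : 0 < e) by (unfold e; apply Rdiv_lt_0_compat; lra).
    exists (Rpower e (/ tau)). split. apply exp_pos.
    intros w [_ Hw]. unfold g. rewrite (clamp_id a b z) by exact Hz.
    destruct (Req_dec (clamp a b w) z) as [E|E].
    + rewrite E. unfold Rminus. rewrite Rplus_opp_r, Rabs_R0. lra.
    + eapply Rle_lt_trans. apply Hhol; auto. apply clamp_in; lra.
      assert (Hl := clamp_lip a b z w ltac:(lra)). rewrite (clamp_id a b z) in Hl by exact Hz.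
      assert (Hr : 0 < Rabs (clamp a b w - z)) by (apply Rabs_pos_lt; lra).
      assert (Rpower (Rabs (clamp a b w - z)) tau < e).
      { apply Rpower_small; auto. lra. }
      assert (C * Rpower (Rabs (clamp a b w - z)) tau <= C * e) by (apply Rmult_le_compat_l; lra).
      assert (C * e < eps). { assert (e * (C + 1) = eps) by (unfold e; field; lra). nra. }
      lra.
  - exists (g mx), C. unfold g in *. rewrite (clamp_id a b mx) in * by exact Hmx.
    split; [apply Hp; exact Hmx|]. split; [exact HC|].
    split; [exact Hh|]. exists f'. split; [exact Hd|]. split; [|exact Hhol].
    intros x Hx. specialize (Hmin x Hx). rewrite (clamp_id a b x) in Hmin by exact Hx. exact Hmin.
Qed.

Lemma list_good a b tau S : a < b -> 0 < tau -> (forall f, In f S -> Diff1tau a b tau f) ->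
  exists m C, 0 < m /\ 0 <= C /\ forall f, In f S -> Good a b tau m C f.
Proof.
  intros Hab Ht. induction S as [|f S IH]; intros HS.
  - exists 1, 0. split; [lra|split; [lra|]]. intros f [].
  - destruct IH as [m [C [Hm [HC HG]]]]. intros g Hg; apply HS; right; auto.
    destruct (Diff_good a b tau f Hab Ht (HS f (or_introl eq_refl))) as [m1 [C1 [Hm1 [HC1 G1]]]].
    exists (Rmin m m1), (Rmax C C1). split; [apply Rmin_pos; auto|].
    split; [eapply Rle_trans; [exact HC| apply Rmax_l]|].
    intros g [E|Hg].
    + subst g. destruct G1 as [Hh [f' [D1 [D2 D3]]]]. split; auto. exists f'.
      split; auto. split. intros x Hx; eapply Rle_trans; [apply Rmin_r| auto].
      intros x y Hx Hy Hxy. eapply Rle_trans; [apply D3; auto|].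
      apply Rmult_le_compat_r. left; apply exp_pos. apply Rmax_r.
    + destruct (HG g Hg) as [Hh [f' [D1 [D2 D3]]]]. split; auto. exists f'.
      split; auto. split. intros x Hx; eapply Rle_trans; [apply Rmin_l| auto].
      intros x y Hx Hy Hxy. eapply Rle_trans; [apply D3; auto|].
      apply Rmult_le_compat_r. left; apply exp_pos. apply Rmax_l.
Qed.

Lemma hol_bound a b tau C f' P Q x y :
  0 < tau -> 0 <= C ->
  (forall x y, inI a b x -> inI a b y -> x <> y ->
        Rabs (f' x - f' y) <= C * Rpower (Rabs (x - y)) tau) ->
  inI a b P -> inI a b Q -> P <= x <= Q -> P <= y <= Q -> P < Q ->
  Rabs (f' x - f' y) <= C * Rpower (Q - P) tau.
Proof.
  intros Ht HC H HP HQ Hx Hy HPQ.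
  assert (0 <= C * Rpower (Q - P) tau) by (apply Rmult_le_pos; [lra| left; apply exp_pos]).
  destruct (Req_dec x y) as [E|E].
  - subst. unfold Rminus. rewrite Rplus_opp_r, Rabs_R0. auto.
  - eapply Rle_trans. apply H; auto; unfold inI in *; split; lra.
    apply Rmult_le_compat_l; auto. apply Rle_Rpower_l. lra.
    split. apply Rabs_pos_lt; lra. unfold Rabs; destruct Rcase_abs; lra.
Qed.

Lemma disp_bound a b tau m C t P Q x :
  a < b -> 0 < tau -> 0 <= C -> Good a b tau m C t -> inI a b P -> inI a b Q -> P < Q ->
  t P = P -> t Q = Q -> P <= x <= Q ->
  Rabs (t x - x) <= C * Rpower (Q - P) tau * (Q - P).
Proof.
  intros Hab Ht HC [Hh [t' [Hd [Hm Hhol]]]] HP HQ HPQ FP FQ Hx.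
  unfold inI in *.
  destruct (mvtI a b t t' P Q Hab Hh Hd ltac:(lra) HPQ ltac:(lra)) as [eta [Heta Eeta]].
  assert (E1 : t' eta = 1). { rewrite FP, FQ in Eeta.
    apply Rmult_eq_reg_r with (Q - P); lra. }
  destruct (Req_dec x P) as [E|E].
  - subst. rewrite FP. unfold Rminus. rewrite Rplus_opp_r, Rabs_R0.
    apply Rmult_le_pos; [apply Rmult_le_pos; [lra| left; apply exp_pos]|lra].
  - destruct (mvtI a b t t' P x Hab Hh Hd ltac:(lra) ltac:(lra) ltac:(lra)) as [xi [Hxi Exi]].
    replace (t x - x) with ((t' xi - t' eta) * (x - P)) by (rewrite E1; rewrite FP in Exi; lra).
    rewrite Rabs_mult.
    assert (Hb := hol_bound a b tau C t' P Q xi eta Ht HC Hhol ltac:(unfold inI; lra) ltac:(unfold inI; lra) ltac:(lra) ltac:(lra) HPQ).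
    apply Rmult_le_compat; try apply Rabs_pos; auto.
    unfold Rabs; destruct Rcase_abs; lra.
Qed.

Lemma displacement a b tau m C t P Q p q :
  a < b -> 0 < tau -> 0 <= C -> Good a b tau m C t -> inI a b P -> inI a b Q -> P < Q ->
  P <= p -> p < q -> q <= Q ->
  (forall y, (exists x, P < x < Q /\ t x = y) <-> P < y < Q) ->
  ~ (exists y, (t p < y < t q) /\ p < y < q) ->
  q - p <= 2 * (C * Rpower (Q - P) tau * (Q - P)).
Proof.
  intros Hab Ht HC HG HP HQ HPQ H1 H2 H3 Hon Hdis.
  assert (Hm := Homeo_Hm a b t (proj1 HG)).
  assert (FP := fix_left a b t P Q Hm HP HQ HPQ Hon).
  assert (FQ := fix_right a b t P Q Hm HP HQ HPQ Hon).
  set (x := (p + q) / 2).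
  assert (Hb := disp_bound a b tau m C t P Q x Hab Ht HC HG HP HQ HPQ FP FQ ltac:(unfold x; lra)).
  destruct (Rle_or_lt (q - p) (2 * (C * Rpower (Q - P) tau * (Q - P)))) as [L|L]; auto.
  exfalso. apply Hdis. exists (t x). split.
  - destruct Hm as [_ [_ T3]]. unfold inI in *. split; apply T3; unfold inI, x; lra.
  - revert Hb. unfold Rabs; destruct Rcase_abs; unfold x in *; lra.
Qed.

Lemma ratio_exp m x y : 0 < m -> m <= x -> m <= y -> exp (- (Rabs (x - y) / m)) <= x / y.
Proof.
  intros Hm Hx Hy.
  assert (H1 : y / x <= 1 + Rabs (x - y) / m).
  { assert (Rabs (x - y) / x <= Rabs (x - y) / m).
    { unfold Rdiv. apply Rmult_le_compat_l. apply Rabs_pos. apply Rinv_le_contravar; lra. }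
    assert (y / x = 1 + (y - x) / x) by (field; lra).
    assert ((y - x) / x <= Rabs (x - y) / x).
    { unfold Rdiv. apply Rmult_le_compat_r. left; apply Rinv_0_lt_compat; lra.
      unfold Rabs; destruct Rcase_abs; lra. }
    lra. }
  assert (H2 := exp_ineq1_le (Rabs (x - y) / m)).
  rewrite exp_Ropp. replace (x / y) with (/ (y / x)) by (field; lra).
  apply Rinv_le_contravar. apply Rdiv_lt_0_compat; lra. lra.
Qed.

Lemma dist_step a b tau m C s P Q p q :
  a < b -> 0 < tau -> 0 < m -> 0 <= C -> Good a b tau m C s -> inI a b P -> inI a b Q ->
  P <= p -> p < q -> q <= Q ->
  (q - p) / (Q - P) * exp (- (C / m * Rpower (Q - P) tau)) <= (s q - s p) / (s Q - s P).
Proof.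
  intros Hab Ht Hm HC [Hh [s' [Hd [Hmin Hhol]]]] HP HQ H1 H2 H3.
  unfold inI in *.
  destruct (mvtI a b s s' p q Hab Hh Hd ltac:(lra) H2 ltac:(lra)) as [x1 [Hx1 E1]].
  destruct (mvtI a b s s' P Q Hab Hh Hd ltac:(lra) ltac:(lra) ltac:(lra)) as [x2 [Hx2 E2]].
  rewrite E1, E2.
  assert (m1 : m <= s' x1) by (apply Hmin; unfold inI; lra).
  assert (m2 : m <= s' x2) by (apply Hmin; unfold inI; lra).
  replace (s' x1 * (q - p) / (s' x2 * (Q - P))) with ((q - p) / (Q - P) * (s' x1 / s' x2)) by (field; lra).
  apply Rmult_le_compat_l. apply Rdiv_le_0_compat; lra.
  eapply Rle_trans; [|apply (ratio_exp m); auto].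
  assert (Hb := hol_bound a b tau C s' P Q x1 x2 Ht HC Hhol ltac:(unfold inI; lra) ltac:(unfold inI; lra) ltac:(lra) ltac:(lra) ltac:(lra)).
  assert (Rabs (s' x1 - s' x2) / m <= C / m * Rpower (Q - P) tau).
  { unfold Rdiv. rewrite Rmult_assoc, (Rmult_comm (/ m)), <- Rmult_assoc.
    apply Rmult_le_compat_r; [left; apply Rinv_0_lt_compat; lra| exact Hb]. }
  destruct (Rle_lt_or_eq_dec _ _ H) as [L|L].
  - left. apply exp_increasing. lra.
  - rewrite L. lra.
Qed.

Fixpoint psum (f : nat -> R) (n : nat) : R :=
  match n with O => 0 | S n => psum f n + f n end.

Lemma psum_sum f n : psum f (S n) = sum_n f n.
Proof. induction n. simpl. rewrite sum_O. ring.
  change (psum f (S (S n))) with (psum f (S n) + f (S n)). rewrite IHn, sum_Sn. reflexivity. Qed.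

Lemma psum_le f l : (forall n, 0 <= f n) -> is_series f l -> forall n, psum f n <= l.
Proof.
  intros Hp Hs n.
  assert (psum f n <= psum f (S n)) by (simpl; specialize (Hp n); lra).
  rewrite psum_sum in H. eapply Rle_trans; [exact H|].
  apply is_lim_seq_incr_compare. exact Hs.
  intros k. rewrite sum_Sn. specialize (Hp (S k)). change (plus (sum_n f k) (f (S k))) with (sum_n f k + f (S k)). lra.
Qed.

Lemma nest_le c d i : c i < d i ->
  strict_sup (openI (c (i - 1)%nat) (d (i - 1)%nat)) (openI (c i) (d i)) ->
  c (i - 1)%nat <= c i /\ d i <= d (i - 1)%nat.
Proof.
  intros Hcd [Hin _]. unfold openI in Hin. split.
  - destruct (Rle_or_lt (c (i-1)%nat) (c i)) as [L|L]; auto. exfalso.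
    set (x := (c i + Rmin (c (i-1)%nat) (d i)) / 2).
    assert (H1 := Rmin_l (c (i-1)%nat) (d i)). assert (H2 := Rmin_r (c (i-1)%nat) (d i)).
    assert (H3 : c i < Rmin (c (i-1)%nat) (d i)) by (apply Rmin_glb_lt; lra).
    assert (H := Hin x ltac:(unfold x; lra)). unfold x in H; lra.
  - destruct (Rle_or_lt (d i) (d (i-1)%nat)) as [L|L]; auto. exfalso.
    set (x := (d i + Rmax (d (i-1)%nat) (c i)) / 2).
    assert (H1 := Rmax_l (d (i-1)%nat) (c i)). assert (H2 := Rmax_r (d (i-1)%nat) (c i)).
    assert (H3 : Rmax (d (i-1)%nat) (c i) < d i) by (apply Rmax_lub_lt; lra).
    assert (H := Hin x ltac:(unfold x; lra)). unfold x in H; lra.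
Qed.

Theorem lemma3p4 (a b : R) (k : nat) (u tau : R) :
  a < b -> (2 <= k)%nat -> 0 < u <= 1 -> 0 < tau < 1 ->
  tau * (1 + tau) ^ (k - 2) >= u ->
  forall S : list (R -> R),
    (forall f, In f S -> Diff1tau a b tau f) ->
    ~ nesting a b k u S.
Proof.
  intros Hab Hk Hu Ht Hcond SS HS [HSh [c [d [s [Hcd [Hstr [Hsn [Hser Hdisp]]]]]]]].
  destruct (list_good a b tau SS Hab ltac:(lra) HS) as [m [C [Hmpos [HC HG]]]].
  assert (Hsm : forall n, (1 <= n)%nat -> Hm a b (s n)).
  { intros n Hn. apply Homeo_Hm, HSh, Hsn, Hn. }
  assert (Hw := word_Hm a b s Hsm).
  set (De := fun n i => word s n (d i) - word s n (c i)).
  assert (Hnest : forall i, (2 <= i <= k)%nat -> c (i - 1)%nat <= c i /\ d i <= d (i - 1)%nat).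
  { intros i Hi. apply nest_le. apply Hcd; lia. apply Hstr; auto. }
  assert (HcdI : forall i, (1 <= i <= k)%nat -> inI a b (c i) /\ inI a b (d i) /\ c i < d i).
  { intros i Hi. destruct (Hcd i Hi) as [h1 [h2 h3]]. unfold inI; repeat split; lra. }
  assert (Dpos : forall n i, (1 <= i <= k)%nat -> 0 < De n i /\ De n i <= b - a).
  { intros n i Hi. destruct (HcdI i Hi) as [h1 [h2 h3]]. unfold De.
    destruct (Hw n) as [W1 [_ W3]]. assert (W3' := W3 _ _ h1 h2 h3).
    assert (Y1 := W1 _ h1). assert (Y2 := W1 _ h2). unfold inI in *. split; lra. }
  assert (Hlev : forall i n, (2 <= i <= k)%nat ->
     De n i <= 2 * (C * Rpower (De n (i - 1)%nat) tau * De n (i - 1)%nat)).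
  { intros i n Hi. destruct (Hdisp i n Hi) as [t [Ht_in [Hdj Hse]]].
    destruct (HcdI i ltac:(lia)) as [ci [di cdi]].
    destruct (HcdI (i - 1)%nat ltac:(lia)) as [ci1 [di1 cdi1]].
    destruct (Hnest i Hi) as [N1 N2].
    assert (Ht_m := Homeo_Hm a b t (HSh t Ht_in)).
    destruct (Hw n) as [W1 [W2 W3]] eqn:EW.
    assert (PI := W1 _ ci1). assert (QI := W1 _ di1).
    assert (PQ := W3 _ _ ci1 di1 cdi1). assert (pq := W3 _ _ ci di cdi).
    assert (Pp : word s n (c (i-1)%nat) <= word s n (c i)) by (apply (Hm_le a b); auto).
    assert (qQ : word s n (d i) <= word s n (d (i-1)%nat)) by (apply (Hm_le a b); auto).
    unfold De. apply (displacement a b tau m C t _ _ _ _ Hab ltac:(lra) HC (HG t Ht_in) PI QI PQ Pp pq qQ).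
    - intros y. split.
      + intros [x [Hx Ex]]. apply (img_int a b (word s n) _ _ (Hw n) ci1 di1).
        apply Hse. exists x. split; auto.
        apply (img_int a b (word s n) _ _ (Hw n) ci1 di1). exact Hx.
      + intros Hy. apply (img_int a b (word s n) _ _ (Hw n) ci1 di1) in Hy.
        apply Hse in Hy. destruct Hy as [x [Hx Ex]]. exists x. split; auto.
        apply (img_int a b (word s n) _ _ (Hw n) ci1 di1) in Hx. exact Hx.
    - intros [y [Hy1 Hy2]]. apply (Hdj y). split.
      + apply (img_int a b t _ _ Ht_m) in Hy1; try (apply W1; auto).
        destruct Hy1 as [x [Hx Ex]]. exists x. split; auto.
        apply (img_int a b (word s n) _ _ (Hw n) ci di). exact Hx.
      + apply (img_int a b (word s n) _ _ (Hw n) ci di). exact Hy2. }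
  destruct k as [|[|k0]]; [lia|lia|].
  replace (S (S k0) - 2)%nat with k0 in Hcond by lia.
  assert (Hlv : forall j, (S j <= S k0)%nat -> exists K, 0 < K /\
     forall n, De n (S j) <= K * Rpower (De n 1%nat) ((1 + tau) ^ j)).
  { induction j as [|j IHj].
    - intros _. exists 1. split; [lra|]. intros n. rewrite pow_O.
      rewrite Rpower_1 by (apply Dpos; lia). lra.
    - intros Hj. destruct (IHj ltac:(lia)) as [K [HK HB]].
      assert (HRK : 0 < Rpower K (1 + tau)) by apply exp_pos.
      exists (2 * C * Rpower K (1 + tau) + 1). split.
      { assert (0 <= 2 * C * Rpower K (1 + tau)) by (apply Rmult_le_pos; lra). lra. }
      intros n. assert (Hl := Hlev (S (S j)) n ltac:(lia)).
      change (S (S j) - 1)%nat with (S j) in Hl.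
      assert (Hx := Dpos n (S j) ltac:(lia)). assert (Hl1 := Dpos n 1%nat ltac:(lia)).
      specialize (HB n).
      set (x := De n (S j)) in *. set (l1 := De n 1%nat) in *.
      set (E := (1 + tau) ^ j) in *.
      assert (HE : 0 < Rpower l1 E) by apply exp_pos.
      assert (X1 : Rpower x tau * x = Rpower x (1 + tau)).
      { rewrite Rpower_plus, Rpower_1 by lra. ring. }
      assert (X2 : Rpower x (1 + tau) <= Rpower (K * Rpower l1 E) (1 + tau)).
      { apply Rle_Rpower_l; lra. }
      rewrite <- Rpower_mult_distr, Rpower_mult in X2 by lra.
      replace (E * (1 + tau)) with ((1 + tau) ^ S j) in X2 by (unfold E; simpl; ring).
      assert (HF : 0 < Rpower l1 ((1 + tau) ^ S j)) by apply exp_pos.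
      assert (2 * (C * Rpower x tau * x) <= 2 * C * (Rpower K (1 + tau) * Rpower l1 ((1 + tau) ^ S j))).
      { replace (2 * (C * Rpower x tau * x)) with (2 * C * (Rpower x tau * x)) by ring.
        apply Rmult_le_compat_l; lra. }
      assert (0 <= 2 * C * Rpower K (1 + tau) * Rpower l1 ((1 + tau) ^ S j)) by
        (apply Rmult_le_pos; [apply Rmult_le_pos|]; lra).
      nra. }
  destruct (Hlv k0 ltac:(lia)) as [K [HK HB]].
  set (L := fun n => De n (S k0)).
  set (A := fun n => Rpower (L n) tau).
  assert (HA : ex_series A).
  { set (M := b - a + 1). set (E := (1 + tau) ^ k0) in *.
    assert (HEu : 0 <= tau * E - u) by lra.
    apply (ex_series_le A (fun n => (Rpower K tau * Rpower M (tau * E - u)) * Rpower (De n 1%nat) u)).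
    - intros n. change (norm (A n)) with (Rabs (A n)). rewrite Rabs_pos_eq by (left; apply exp_pos).
      unfold A, L. specialize (HB n).
      assert (Hx := Dpos n (S k0) ltac:(lia)). assert (Hl1 := Dpos n 1%nat ltac:(lia)).
      set (x := De n (S k0)) in *. set (l1 := De n 1%nat) in *.
      assert (HE : 0 < Rpower l1 E) by apply exp_pos.
      assert (X2 : Rpower x tau <= Rpower (K * Rpower l1 E) tau) by (apply Rle_Rpower_l; lra).
      rewrite <- Rpower_mult_distr, Rpower_mult in X2 by lra.
      replace (E * tau) with (u + (tau * E - u)) in X2 by ring.
      rewrite Rpower_plus in X2.
      assert (Rpower l1 (tau * E - u) <= Rpower M (tau * E - u)) by (apply Rle_Rpower_l; unfold M; lra).
      assert (0 < Rpower K tau) by apply exp_pos. assert (0 < Rpower l1 u) by apply exp_pos.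
      assert (Rpower K tau * (Rpower l1 u * Rpower l1 (tau * E - u)) <=
              Rpower K tau * (Rpower l1 u * Rpower M (tau * E - u))).
      { apply Rmult_le_compat_l; [lra|]. apply Rmult_le_compat_l; lra. }
      lra.
    - eapply ex_series_ext; [|apply (ex_series_scal_l (Rpower K tau * Rpower M (tau * E - u)) _ Hser)].
      intros n. reflexivity. }
  destruct HA as [l Hl].
  assert (HA0 : forall n, 0 <= A n) by (intros; left; apply exp_pos).
  assert (Hps := psum_le A l HA0 Hl).
  set (r := fun n => De n (S (S k0)) / L n).
  assert (Hr : forall n, r 0%nat * exp (- (C / m * psum A n)) <= r n).
  { induction n as [|n IH].
    - simpl. rewrite Rmult_0_r, Ropp_0, exp_0. lra.
    - destruct (HcdI (S (S k0)) ltac:(lia)) as [ci [di cdi]].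
      destruct (HcdI (S k0) ltac:(lia)) as [ci1 [di1 cdi1]].
      destruct (Hnest (S (S k0)) ltac:(lia)) as [N1 N2].
      change (S (S k0) - 1)%nat with (S k0) in N1, N2.
      destruct (Hw n) as [W1 [W2 W3]].
      assert (PI := W1 _ ci1). assert (QI := W1 _ di1).
      assert (pq := W3 _ _ ci di cdi).
      assert (Pp : word s n (c (S k0)) <= word s n (c (S (S k0)))) by (apply (Hm_le a b); auto).
      assert (qQ : word s n (d (S (S k0))) <= word s n (d (S k0))) by (apply (Hm_le a b); auto).
      assert (Hst := dist_step a b tau m C (s (S n)) _ _ _ _ Hab ltac:(lra) Hmpos HC
                (HG _ (Hsn (S n) ltac:(lia))) PI QI Pp pq qQ).
      assert (Hst' : r n * exp (- (C / m * A n)) <= r (S n)) by exact Hst.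
      simpl psum. rewrite Rmult_plus_distr_l, Ropp_plus_distr, exp_plus.
      assert (0 < exp (- (C / m * A n))) by apply exp_pos.
      assert (r 0%nat * exp (- (C / m * psum A n)) * exp (- (C / m * A n)) <= r n * exp (- (C / m * A n)))
        by (apply Rmult_le_compat_r; lra).
      lra. }
  assert (Hr0 : 0 < r 0%nat).
  { unfold r. apply Rdiv_lt_0_compat; apply Dpos; lia. }
  set (c0 := r 0%nat * exp (- (C / m * l))).
  assert (Hc0 : 0 < c0) by (unfold c0; apply Rmult_lt_0_compat; [lra| apply exp_pos]).
  assert (Hlow : forall n, c0 <= r n).
  { intros n. eapply Rle_trans; [|apply Hr]. unfold c0. apply Rmult_le_compat_l; [lra|].
    assert (C / m * psum A n <= C / m * l).
    { apply Rmult_le_compat_l; [apply Rdiv_le_0_compat; lra| apply Hps]. }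
    destruct (Rle_lt_or_eq_dec _ _ H) as [L1|L1].
    - left; apply exp_increasing; lra.
    - rewrite L1; lra. }
  assert (Hup : forall n, r n <= 2 * C * A n).
  { intros n. assert (Hl2 := Hlev (S (S k0)) n ltac:(lia)).
    change (S (S k0) - 1)%nat with (S k0) in Hl2.
    assert (HL := Dpos n (S k0) ltac:(lia)).
    unfold r, A. fold (L n) in Hl2 |- *. change (De n (S k0)) with (L n) in Hl2, HL.
    apply Rmult_le_reg_r with (L n); [lra|].
    unfold Rdiv. rewrite Rmult_assoc, Rinv_l by lra. lra. }
  assert (Hlim := ex_series_lim_0 A (ex_intro _ l Hl)).
  apply is_lim_seq_Reals in Hlim.
  assert (He : 0 < c0 / (2 * C + 1)) by (apply Rdiv_lt_0_compat; lra).
  destruct (Hlim _ He) as [N HN]. specialize (HN N (Nat.le_refl N)).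
  unfold R_dist in HN. rewrite Rminus_0_r, Rabs_pos_eq in HN by apply HA0.
  specialize (Hlow N). specialize (Hup N). specialize (HA0 N).
  assert (A N * (2 * C + 1) < c0).
  { apply Rmult_lt_reg_r with (/ (2 * C + 1)). apply Rinv_0_lt_compat; lra.
    rewrite Rmult_assoc, Rinv_r, Rmult_1_r by lra. exact HN. }
  nra.
Qed.
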